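(* Fix $\lambda_t \in \mathbb{R}^m_+$. For each deterministic policy $\pi \in \Pi$ define $\mathcal{T}^\pi:\mathbb{R}^{\mathcal{S}}\to\mathbb{R}^{\mathcal{S}}$ by $$[\mathcal{T}^{\pi} v](s) = (r - \lambda_t^{\top}g)(s, \pi(s)) + \gamma \langle P^o_{s, \pi(s)}, v \rangle + \gamma \min_{P \in \mathcal{P}} \langle P_{s, \pi(s)} - P^o_{s, \pi(s)}, V^{\pi}_{r} \rangle - \gamma \lambda_t^{\top} \min_{P \in \mathcal{P}} \langle P_{s, \pi(s)} - P^o_{s, \pi(s)}, V^{\pi}_{g} \rangle,$$ where $(r-\lambda_t^\top g)(s,a) = r(s,a) - \lambda_t^\top g(s,a)$ and the second minimum is taken componentwise over $g_1,\dots,g_m$, and define $[\mathcal{T}^* v](s) = \max_{\pi \in \Pi}[\mathcal{T}^\pi v](s)$. Then: (1) (Monotonicity) if $v_1,v_2 \in \mathbb{R}^{\mathcal{S}}$ with $v_1 \ge v_2$ componentwise, then $\mathcal{T}^\pi v_1 \ge \mathcal{T}^\pi v_2$ and $\mathcal{T}^* v_1 \ge \mathcal{T}^* v_2$; (2) (Transition invariance) for every $c\in\mathbb{R}$, $\mathcal{T}^\pi(v + c\mathbf{1}) = \mathcal{T}^\pi v + \gamma c\mathbf{1}$ and $\mathcal{T}^*(v + c\mathbf{1}) = \mathcal{T}^* v + \gamma c\mathbf{1}$; (3) (Contraction) $\mathcal{T}^\pi$ and $\mathcal{T}^*$ are $\gamma$-contractions in $\|\cdot\|_\infty$, and $V^\pi_r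 - \lambda_t^\top V^\pi_g$ is the unique fixed point of $\mathcal{T}^\pi$.
   Context: $\mathcal{S},\mathcal{A}$ are finite, $\gamma\in[0,1)$. $P^o = (P^o_{s,a})$ is a nominal kernel, and $\mathcal{P} = \otimes_{(s,a)}\mathcal{P}_{s,a}$ is an $(s,a)$-rectangular uncertainty set with $\mathcal{P}_{s,a} = \{P\in\Delta(\mathcal{S}) : D(P,P^o_{s,a})\le\beta_{s,a}\}$ for a function $D$ and levels $\beta_{s,a}$ (minima over these sets taken to be attained); $\min_{P\in\mathcal{P}}\langle P_{s,a}, w\rangle$ means $\min_{P_{s,a}\in\mathcal{P}_{s,a}}\langle P_{s,a},w\rangle$. $r:\mathcal{S}\times\mathcal{A}\to[0,\bar R]$ is a reward, $g=(g_1,\dots,g_m)$ with $g_i:\mathcal{S}\times\mathcal{A}\to[0,\tau_i]$ are constraint rewards. $\Pi$ is the set of deterministic stationary policies $\pi:\mathcal{S}\to\mathcal{A}$. For a reward $u$, $V^\pi_u(s) = \min_{\mathcal{K}\in\otimes_{t\ge0}\mathcal{P}}\mathbb{E}_{\mathcal{K}}[\sum_{t\ge0}\gamma^t u(s_t,a_t)\mid s_0=s,\pi]$ is the robust value function (worst case over sequences of kernels from $\mathcal{P}$, one per time step); $V^\pi_g = (V^\pi_{g_1},\dots,V^\pi_{g_m})^\top$. In the definition of $\mathcal{T}^\pi$, $V^\pi_r$ and $V^\pi_g$ are fixed (they depend on $\pi$, not on $v$). *)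

(* Defs.v *)
From HB Require Import structures.
From mathcomp Require Import all_boot all_order all_algebra.
From mathcomp Require Import all_classical all_reals all_analysis.
Set Implicit Arguments. Unset Strict Implicit. Unset Printing Implicit Defensive.
Import Order.TTheory GRing.Theory Num.Theory.
Local Open Scope classical_set_scope.
Local Open Scope ring_scope.

(* A transition kernel: P s a s' = probability of s' after (s,a). *)
Definition tkernel (R : realType) (S A : finType) := S -> A -> S -> R.

Definition ip (R : realType) (S : finType) (p w : S -> R) : R :=
  \sum_(s' : S) p s' * w s'.

Definition is_dist (R : realType) (S : finType) (p : S -> R) : Prop :=
  (forall s', 0 <= p s') /\ \sum_(s' : S) p s' = 1.

Definition Pset (R : realType) (S A : finType) (Po : tkernel R S A)
  (D : (S -> R) -> (S -> R) -> R) (beta : S -> A -> R) (s : S) (a : A)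
  : set (S -> R) :=
  [set P | is_dist P /\ D P (Po s a) <= beta s a].

Definition in_unc (R : realType) (S A : finType) (Po : tkernel R S A)
  (D : (S -> R) -> (S -> R) -> R) (beta : S -> A -> R) (P : tkernel R S A) : Prop :=
  forall s a, Pset Po D beta s a (P s a).

(* state distribution at time t, starting at s0, following the deterministic
   policy pi, the transition at time t being drawn from the kernel K t *)
Fixpoint sdist (R : realType) (S A : finType) (K : nat -> tkernel R S A)
  (pi : S -> A) (s0 : S) (t : nat) : S -> R :=
  match t with
  | 0 => fun s => if s == s0 then 1 else 0
  | t'.+1 => fun s' => \sum_(s : S) sdist K pi s0 t' s * K t' s (pi s) s'
  end.

Definition disc_return (R : realType) (S A : finType) (gamma : R)
  (K : nat -> tkernel R S A) (pi : S -> A) (u : S -> A -> R) (s0 : S) : R :=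
  limn (fun n => \sum_(0 <= t < n)
          gamma ^+ t * \sum_(s : S) sdist K pi s0 t s * u s (pi s)).

(* robust value function: worst case over sequences of kernels in the
   uncertainty set, one per time step *)
Definition robust_value (R : realType) (S A : finType) (gamma : R)
  (Po : tkernel R S A) (D : (S -> R) -> (S -> R) -> R) (beta : S -> A -> R)
  (pi : S -> A) (u : S -> A -> R) (s0 : S) : R :=
  inf [set disc_return gamma K pi u s0 | K in
         [set K : nat -> tkernel R S A | forall t, in_unc Po D beta (K t)]].

Definition rmin (R : realType) (S A : finType) (Po : tkernel R S A)
  (D : (S -> R) -> (S -> R) -> R) (beta : S -> A -> R) (s : S) (a : A)
  (w : S -> R) : R :=
  inf [set ip (fun s' => P s' - Po s a s') w | P in Pset Po D beta s a].

Definition Tpi (R : realType) (S A : finType) (m : nat) (gamma : R)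
  (Po : tkernel R S A) (D : (S -> R) -> (S -> R) -> R) (beta : S -> A -> R)
  (r : S -> A -> R) (g : 'I_m -> S -> A -> R) (lam : 'I_m -> R)
  (pi : S -> A) (v : S -> R) : S -> R :=
  fun s =>
    (r s (pi s) - \sum_(i < m) lam i * g i s (pi s))
    + gamma * ip (Po s (pi s)) v
    + gamma * rmin Po D beta s (pi s) (robust_value gamma Po D beta pi r)
    - gamma * \sum_(i < m)
        lam i * rmin Po D beta s (pi s) (robust_value gamma Po D beta pi (g i)).

Definition Tstar (R : realType) (S A : finType) (m : nat) (gamma : R)
  (Po : tkernel R S A) (D : (S -> R) -> (S -> R) -> R) (beta : S -> A -> R)
  (r : S -> A -> R) (g : 'I_m -> S -> A -> R) (lam : 'I_m -> R)
  (v : S -> R) : S -> R :=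
  fun s => sup [set Tpi gamma Po D beta r g lam pi v s | pi in
                 [set: {ffun S -> A}]].

Definition supnorm (R : realType) (S : finType) (v : S -> R) : R :=
  \big[Num.max/0]_(s : S) `|v s|.

(* Main.v *)
Require Import Defs.
From HB Require Import structures.
From mathcomp Require Import all_boot all_order all_algebra.
From mathcomp Require Import all_classical all_reals all_analysis.
From mathcomp Require Import ring lra.
Import Order.TTheory GRing.Theory Num.Theory numFieldNormedType.Exports.
Local Open Scope classical_set_scope.
Local Open Scope ring_scope.

Lemma ipD (R : realType) (S : finType) (p v w : S -> R) :
  ip p (fun s => v s + w s) = ip p v + ip p w.
Proof. by rewrite /ip -big_split /=; apply: eq_bigr => s _; rewrite mulrDr. Qed.

Lemma ipB (R : realType) (S : finType) (p v w : S -> R) :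
  ip p (fun s => v s - w s) = ip p v - ip p w.
Proof.
rewrite /ip -sumrB /=; apply: eq_bigr => s _; rewrite mulrBr //.
Qed.

Lemma ipBl (R : realType) (S : finType) (p q w : S -> R) :
  ip (fun s => p s - q s) w = ip p w - ip q w.
Proof. by rewrite /ip -sumrB /=; apply: eq_bigr => s _; rewrite mulrBl. Qed.

Lemma ipc (R : realType) (S : finType) (p : S -> R) c :
  is_dist p -> ip p (fun _ => c) = c.
Proof.
case=> _ h1; rewrite /ip -big_distrl /= h1 mul1r //.
Qed.

Lemma ip0 (R : realType) (S : finType) (p : S -> R) :
  ip p (fun _ => 0) = 0.
Proof. by rewrite /ip big1 // => s _; rewrite mulr0. Qed.

Lemma ip_le (R : realType) (S : finType) (p v w : S -> R) :
  (forall s, 0 <= p s) -> (forall s, v s <= w s) -> ip p v <= ip p w.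
Proof. move=> hp hvw; rewrite /ip; apply: ler_sum => s _; exact: ler_wpM2l. Qed.

Lemma ip_abs (R : realType) (S : finType) (p v : S -> R) b :
  is_dist p -> (forall s, `|v s| <= b) -> `|ip p v| <= b.
Proof.
move=> [hp h1] hb; rewrite /ip.
apply: (le_trans (ler_norm_sum _ _ _)).
apply: (@le_trans _ _ (\sum_s p s * b)).
  apply: ler_sum => s _; rewrite normrM ger0_norm //; exact: ler_wpM2l.
by rewrite -big_distrl /= h1 mul1r.
Qed.

Lemma supnorm_ge (R : realType) (S : finType) (v : S -> R) s :
  `|v s| <= supnorm v.
Proof. rewrite /supnorm; exact: (le_bigmax 0 (fun s => `|v s|) s). Qed.

Lemma supnorm_le (R : realType) (S : finType) (v : S -> R) b :
  0 <= b -> (forall s, `|v s| <= b) -> supnorm v <= b.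
Proof. move=> hb h; rewrite /supnorm; apply: bigmax_le => // s _; exact: h. Qed.

Lemma supnorm_ge0 (R : realType) (S : finType) (v : S -> R) : 0 <= supnorm v.
Proof.
rewrite /supnorm; elim/big_ind: _ => // x y hx hy.
by rewrite le_max hx.
Qed.

Lemma inf_min (R : realType) (E : set R) x : E x -> (forall y, E y -> x <= y) -> inf E = x.
Proof.
move=> Ex hx; apply/le_anti/andP; split.
  by apply: ge_inf => //; exists x.
by apply: lb_le_inf => //; exists x.
Qed.

Lemma sup_max (R : realType) (E : set R) x : E x -> (forall y, E y -> y <= x) -> sup E = x.
Proof.
move=> Ex hx; apply/le_anti/andP; split.
  by apply: ge_sup => //; exists x.
by apply: ub_le_sup => //; exists x.
Qed.

Lemma ipZ (R : realType) (S : finType) (p v : S -> R) c :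
  ip p (fun s => c * v s) = c * ip p v.
Proof. by rewrite /ip mulr_sumr; apply: eq_bigr => s _; rewrite mulrCA. Qed.

Lemma ip_sdist0 (R : realType) (S A : finType) (K : nat -> tkernel R S A) pi s0 (W : S -> R) :
  ip (sdist K pi s0 0) W = W s0.
Proof.
rewrite /ip /= (bigD1 s0) //= eqxx mul1r big1 ?addr0 // => s /negbTE ->.
by rewrite mul0r.
Qed.

Lemma ip_sdistS (R : realType) (S A : finType) (K : nat -> tkernel R S A) pi s0 t (W : S -> R) :
  ip (sdist K pi s0 t.+1) W = ip (sdist K pi s0 t) (fun s => ip (K t s (pi s)) W).
Proof.
rewrite /ip /=; under eq_bigr do rewrite mulr_suml.
rewrite exchange_big; apply: eq_bigr => s _; rewrite mulr_sumr.
by apply: eq_bigr => s' _; rewrite mulrA.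
Qed.

Lemma sdist_dist (R : realType) (S A : finType) (K : nat -> tkernel R S A) pi s0 t :
  (forall t s a, is_dist (K t s a)) -> is_dist (sdist K pi s0 t).
Proof.
move=> hK; elim: t => [|t [IH0 IH1]].
  split=> [s|] /=; first by case: (s == s0).
  by rewrite (bigD1 s0) //= eqxx big1 ?addr0 // => s /negbTE ->.
split=> [s'|] /=.
  by apply: sumr_ge0 => s _; apply: mulr_ge0 => //; case: (hK t s (pi s)).
rewrite exchange_big /=.
rewrite -IH1; apply: eq_bigr => s _; rewrite -mulr_sumr.
by case: (hK t s (pi s)) => _ ->; rewrite mulr1.
Qed.

Lemma telesc (R : realType) (S A : finType) (gamma : R) (K : nat -> tkernel R S A) pi
  (u : S -> A -> R) s0 (W : nat -> S -> R) n :
  \sum_(0 <= t < n) gamma ^+ t * ip (sdist K pi s0 t) (fun s => u s (pi s))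
  + gamma ^+ n * ip (sdist K pi s0 n) (W n) - W 0%N s0
  = \sum_(0 <= t < n) gamma ^+ t * ip (sdist K pi s0 t)
       (fun s => u s (pi s) + gamma * ip (K t s (pi s)) (W t.+1) - W t s).
Proof.
elim: n => [|n IH].
  by rewrite !big_geq // expr0 mul1r ip_sdist0 add0r subrr.
rewrite !big_nat_recr //= -IH ipB ipD ipZ ip_sdistS exprS.
ring.
Qed.

Lemma ret_bounds (R : realType) (S A : finType) (gamma : R) (K : nat -> tkernel R S A) pi
  (u : S -> A -> R) s0 Ub :
  0 <= gamma < 1 -> 0 <= Ub -> (forall t s a, is_dist (K t s a)) ->
  (forall s a, 0 <= u s a <= Ub) ->
  forall n,
  \sum_(0 <= t < n) gamma ^+ t * ip (sdist K pi s0 t) (fun s => u s (pi s))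
    <= disc_return gamma K pi u s0 <=
  \sum_(0 <= t < n) gamma ^+ t * ip (sdist K pi s0 t) (fun s => u s (pi s))
    + gamma ^+ n * (Ub / (1 - gamma)).
Proof.
move=> /andP [g0 g1] Ub0 hK hu.
pose J n := \sum_(0 <= t < n) gamma ^+ t * ip (sdist K pi s0 t) (fun s => u s (pi s)).
pose C := Ub / (1 - gamma).
have hC : Ub + gamma * C = C.
  rewrite /C; field; apply/eqP => h. have : gamma = 1 by lra. by move=> e; rewrite e ltxx in g1.
have C0 : 0 <= C by rewrite /C; apply: divr_ge0 => //; lra.
have hx : forall t, 0 <= ip (sdist K pi s0 t) (fun s => u s (pi s)) <= Ub.
  move=> t; have [d0 d1] := @sdist_dist _ _ _ K pi s0 t hK; apply/andP; split.
    by apply: sumr_ge0 => s _; apply: mulr_ge0 => //; case/andP: (hu s (pi s)).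
  have <- : ip (sdist K pi s0 t) (fun _ => Ub) = Ub by apply: ipc.
  by apply: ip_le => // s; case/andP: (hu s (pi s)).
have JS : forall n, J n.+1 = J n + gamma ^+ n * ip (sdist K pi s0 n) (fun s => u s (pi s)).
  by move=> n; rewrite /J big_nat_recr.
have tail : forall n k, J (n + k)%N + gamma ^+ (n + k) * C <= J n + gamma ^+ n * C.
  move=> n; elim=> [|k IH]; first by rewrite addn0.
  apply: le_trans IH; rewrite addnS JS exprS -addrA lerD2l.
  rewrite -mulrA mulrCA -mulrDr; apply: ler_wpM2l; first exact: exprn_ge0.
  by rewrite -[X in _ <= X]hC lerD2r; case/andP: (hx (n + k)%N).
have mono : nondecreasing_seq J.
  apply/nondecreasing_seqP => n; rewrite JS lerDl; apply: mulr_ge0; first exact: exprn_ge0.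
  by case/andP: (hx n).
have ub : forall m, J m <= C.
  move=> m; apply: (@le_trans _ _ (J m + gamma ^+ m * C)).
    by rewrite lerDl; apply: mulr_ge0 => //; exact: exprn_ge0.
  have J0 : J 0%N = 0 by rewrite /J big_geq.
  by have := tail 0%N m; rewrite add0n J0 expr0 mul1r add0r.
have hub : has_ubound (range J) by exists C => _ [m _ <-].
have -> : disc_return gamma K pi u s0 = sup (range J).
  have h := nondecreasing_cvgn mono hub.
  have E : lim (J @ \oo) = sup (range J) by apply/cvg_lim.
  exact: E.
move=> n; apply/andP; split.
  by apply: ub_le_sup => //; exists n.
apply: ge_sup; first by exists (J 0%N), 0%N.
move=> _ [m _ <-]; have [mn|nm] := leqP m n.
  apply: (@le_trans _ _ (J n)); first exact: mono.
  by rewrite lerDl; apply: mulr_ge0 => //; exact: exprn_ge0.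
have := tail n (m - n)%N; rewrite subnKC; last exact: ltnW.
apply: le_trans; rewrite lerDl; apply: mulr_ge0 => //; exact: exprn_ge0.
Qed.

Fixpoint Bit (R : realType) (S A : finType) (gamma : R) (Po : tkernel R S A)
  (D : (S -> R) -> (S -> R) -> R) (beta : S -> A -> R) (pi : S -> A)
  (u : S -> A -> R) (k : nat) : S -> R :=
  match k with
  | 0 => fun _ => 0
  | k'.+1 => fun s => u s (pi s) + gamma *
      inf [set ip P (Bit R S A gamma Po D beta pi u k') | P in Pset Po D beta s (pi s)]
  end.
Arguments Bit {R S A}.

Lemma mn_eq (R : realType) (S A : finType) (Po : tkernel R S A)
  (D : (S -> R) -> (S -> R) -> R) (beta : S -> A -> R) s a (w : S -> R) P :
  Pset Po D beta s a P -> (forall Q, Pset Po D beta s a Q -> ip P w <= ip Q w) ->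
  inf [set ip Q w | Q in Pset Po D beta s a] = ip P w.
Proof.
move=> hP hQ; apply: inf_min; first by exists P.
by move=> _ [Q hQ' <-]; apply: hQ.
Qed.
Arguments mn_eq {R S A Po D beta s a w P}.

Lemma rv_bounds (R : realType) (S A : finType) (gamma : R) (Po : tkernel R S A)
  (D : (S -> R) -> (S -> R) -> R) (beta : S -> A -> R) (pi : S -> A)
  (u : S -> A -> R) Ub :
  0 <= gamma < 1 -> 0 <= Ub ->
  (forall s a (w : S -> R), exists2 P, Pset Po D beta s a P &
            forall Q, Pset Po D beta s a Q -> ip P w <= ip Q w) ->
  (forall s a, 0 <= u s a <= Ub) ->
  forall n s0, Bit gamma Po D beta pi u n s0 <= robust_value gamma Po D beta pi u s0
     <= Bit gamma Po D beta pi u n s0 + gamma ^+ n * (Ub / (1 - gamma)).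
Proof.
move=> hg Ub0 hmin hu n s0.
have /choice [pm hpm] : forall x : (S -> R) * S * A, exists P,
   Pset Po D beta x.1.2 x.2 P /\
   forall Q, Pset Po D beta x.1.2 x.2 Q -> ip P x.1.1 <= ip Q x.1.1.
  by move=> [[w s] a]; have [P hP hQ] := hmin s a w; exists P.
pose W t := Bit gamma Po D beta pi u (n - t).
have BitS : forall t, (t < n)%N -> forall s,
   W t s = u s (pi s) + gamma * ip (pm (W t.+1, s, pi s)) (W t.+1).
  move=> t tn s; rewrite /W -(subnSK tn) /=.
  have [h1 h2] := hpm (Bit gamma Po D beta pi u (n - t.+1), s, pi s).
  by rewrite (mn_eq h1 h2).
have Wn : W n = fun _ => 0 by rewrite /W subnn.
have W0 : W 0%N = Bit gamma Po D beta pi u n by rewrite /W subn0.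
pose valid := [set K : nat -> tkernel R S A | forall t, in_unc Po D beta (K t)].
have vdist : forall K, valid K -> forall t s a, is_dist (K t s a).
  by move=> K hK t s a; case: (hK t s a).
pose J K n := \sum_(0 <= t < n) gamma ^+ t * ip (sdist K pi s0 t) (fun s => u s (pi s)).
have lowJ : forall K, valid K -> Bit gamma Po D beta pi u n s0 <= J K n.
  move=> K hK; have := @telesc _ _ _ gamma K pi u s0 W n.
  rewrite Wn W0 ip0 mulr0 addr0 => e.
  rewrite -subr_ge0 /J e big_seq; apply: sumr_ge0 => t.
  rewrite mem_index_iota => /andP [_ tn].
  apply: mulr_ge0; first by apply: exprn_ge0; case/andP: hg.
  apply: sumr_ge0 => s _; apply: mulr_ge0; first by case: (@sdist_dist _ _ _ K pi s0 t (vdist K hK)).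
  rewrite BitS //.
  have h := (hpm (W t.+1, s, pi s)).2 (K t s (pi s)) (hK t s (pi s)).
  have g0 : 0 <= gamma by case/andP: hg.
  have := ler_wpM2l g0 h; lra.
pose Kn : nat -> tkernel R S A := fun t s a => pm (W t.+1, s, a).
have hKn : valid Kn by move=> t s a; exact: (hpm (W t.+1, s, a)).1.
have JKn : J Kn n = Bit gamma Po D beta pi u n s0.
  have := @telesc _ _ _ gamma Kn pi u s0 W n.
  have -> : \sum_(0 <= t < n) gamma ^+ t * ip (sdist Kn pi s0 t)
       (fun s => u s (pi s) + gamma * ip (Kn t s (pi s)) (W t.+1) - W t s) = 0.
    rewrite big_seq big1 // => t; rewrite mem_index_iota => /andP [_ tn].
    rewrite (_ : (fun s => _) = fun _ => 0) ?ip0 ?mulr0 //.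
    by apply/funext => s; rewrite BitS // /Kn subrr.
  rewrite Wn W0 ip0 mulr0 addr0 => e.
  by apply/eqP; rewrite -subr_eq0; apply/eqP; exact: e.
have bnd : forall K, valid K -> J K n <= disc_return gamma K pi u s0 <= J K n + gamma ^+ n * (Ub / (1 - gamma)).
  by move=> K hK; exact: (@ret_bounds _ _ _ gamma K pi u s0 Ub hg Ub0 (vdist K hK) hu n).
have lb : lbound [set disc_return gamma K pi u s0 | K in valid] (Bit gamma Po D beta pi u n s0).
  move=> _ [K hK <-]; apply: le_trans (lowJ K hK) _.
  by case/andP: (bnd K hK).
rewrite /robust_value -/valid; apply/andP; split.
  by apply: lb_le_inf => //; exists (disc_return gamma Kn pi u s0), Kn.
apply: le_trans (_ : disc_return gamma Kn pi u s0 <= _).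
  by apply: ge_inf; [exists (Bit gamma Po D beta pi u n s0) | exists Kn].
by rewrite -JKn; case/andP: (bnd Kn hKn).
Qed.
Lemma geo_zero (R: realType) (gamma e C : R): 0 <= gamma < 1 -> (forall n, `|e| <= gamma ^+ n * C) -> e = 0.
Proof.
move=> /andP [g0 g1] h.
have hc : (fun n => gamma ^+ n * C) @ \oo --> 0 * C.
  apply: cvgMl; apply: cvg_expr; rewrite ger0_norm //.
rewrite mul0r in hc.
have L : lim ((fun n => gamma ^+ n * C) @ \oo) = 0 by apply/cvg_lim.
have : `|e| <= 0.
  rewrite -L; apply: limr_ge; first by apply/cvg_ex; exists 0.
  by near=> n; apply: h.
by rewrite normr_le0 => /eqP.
Unshelve. all: by end_near.
Qed.

Lemma rv_bellman (R : realType) (S A : finType) (gamma : R) (Po : tkernel R S A)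
  (D : (S -> R) -> (S -> R) -> R) (beta : S -> A -> R) (pi : S -> A)
  (u : S -> A -> R) Ub :
  0 <= gamma < 1 -> 0 <= Ub ->
  (forall s a (w : S -> R), exists2 P, Pset Po D beta s a P &
            forall Q, Pset Po D beta s a Q -> ip P w <= ip Q w) ->
  (forall s a, 0 <= u s a <= Ub) ->
  forall s P, Pset Po D beta s (pi s) P ->
  (forall Q, Pset Po D beta s (pi s) Q ->
     ip P (robust_value gamma Po D beta pi u) <= ip Q (robust_value gamma Po D beta pi u)) ->
  robust_value gamma Po D beta pi u s =
    u s (pi s) + gamma * ip P (robust_value gamma Po D beta pi u).
Proof.
move=> hg Ub0 hmin hu s P hP hPm.
set V := robust_value gamma Po D beta pi u.
set C := Ub / (1 - gamma).
have g0 : 0 <= gamma by case/andP: hg.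
have hb := @rv_bounds _ _ _ gamma Po D beta pi u Ub hg Ub0 hmin hu.
apply/eqP; rewrite -subr_eq0; apply/eqP.
apply: (@geo_zero _ gamma _ (gamma * C) hg) => n.
have [Pn hPn hPnm] := hmin s (pi s) (Bit gamma Po D beta pi u n).
have f3 : Bit gamma Po D beta pi u n.+1 s = u s (pi s) + gamma * ip Pn (Bit gamma Po D beta pi u n).
  by rewrite /= (mn_eq hPn hPnm).
have /andP [f2 f1] := hb n.+1 s.
rewrite exprS -mulrA in f1.
have Pd : is_dist P by case: hP.
have Pnd : is_dist Pn by case: hPn.
have f4 : gamma * ip Pn (Bit gamma Po D beta pi u n) <= gamma * ip P V.
  apply: ler_wpM2l => //; apply: le_trans (hPnm P hP) _.
  by apply: ip_le => [s'|s']; [case: Pd | case/andP: (hb n s')].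
have f5 : gamma * ip P V - gamma * (gamma ^+ n * C) <= gamma * ip Pn (Bit gamma Po D beta pi u n).
  rewrite -mulrBr; apply: ler_wpM2l => //.
  apply: le_trans (_ : ip Pn (fun s' => V s' - gamma ^+ n * C) <= _).
    by rewrite ipB ipc // lerD2r; apply: hPm.
  apply: ip_le => [s'|s']; first by case: Pnd.
  by rewrite lerBlDr; case/andP: (hb n s').
rewrite -/V -/C in f1 f2; rewrite mulrCA ler_norml; apply/andP; split; lra.
Qed.

Lemma rmin_eq (R : realType) (S A : finType) (Po : tkernel R S A)
  (D : (S -> R) -> (S -> R) -> R) (beta : S -> A -> R) s a (w : S -> R) P :
  Pset Po D beta s a P -> (forall Q, Pset Po D beta s a Q -> ip P w <= ip Q w) ->
  rmin Po D beta s a w = ip P w - ip (Po s a) w.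
Proof.
move=> hP hQ; rewrite /rmin; apply: inf_min; first by exists P => //; rewrite ipBl.
by move=> _ [Q hQ' <-]; rewrite ipBl lerD2r; apply: hQ.
Qed.
Arguments rmin_eq {R S A Po D beta s a w P}.

Lemma ip_sum (R : realType) (S : finType) m (p : S -> R) (c : 'I_m -> R) (f : 'I_m -> S -> R) :
  ip p (fun s => \sum_(i < m) c i * f i s) = \sum_(i < m) c i * ip p (f i).
Proof.
rewrite /ip; under eq_bigr do rewrite mulr_sumr.
rewrite exchange_big; apply: eq_bigr => i _; rewrite mulr_sumr.
by apply: eq_bigr => s _; rewrite mulrCA.
Qed.

Lemma Tpi_aff (R : realType) (S A : finType) (m : nat) (gamma : R)
  (Po : tkernel R S A) (D : (S -> R) -> (S -> R) -> R) (beta : S -> A -> R)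
  (r : S -> A -> R) (g : 'I_m -> S -> A -> R) (lam : 'I_m -> R) (pi : S -> A) v s :
  Tpi gamma Po D beta r g lam pi v s =
  Tpi gamma Po D beta r g lam pi (fun _ => 0) s + gamma * ip (Po s (pi s)) v.
Proof. rewrite /Tpi ip0; ring. Qed.

Lemma Tdiff_le (R : realType) (S A : finType) (m : nat) (gamma : R)
  (Po : tkernel R S A) (D : (S -> R) -> (S -> R) -> R) (beta : S -> A -> R)
  (r : S -> A -> R) (g : 'I_m -> S -> A -> R) (lam : 'I_m -> R) (pi : S -> A) v1 v2 s :
  0 <= gamma -> (forall s a, is_dist (Po s a)) ->
  `|Tpi gamma Po D beta r g lam pi v1 s - Tpi gamma Po D beta r g lam pi v2 s|
   <= gamma * supnorm (fun s => v1 s - v2 s).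
Proof.
move=> g0 hPo.
rewrite (@Tpi_aff _ _ _ _ gamma Po D beta r g lam pi v1 s) (@Tpi_aff _ _ _ _ gamma Po D beta r g lam pi v2 s).
rewrite (_ : forall a b c : R, a + b - (a + c) = b - c); last by move=> *; ring.
rewrite -mulrBr -ipB normrM ger0_norm //; apply: ler_wpM2l => //.
by apply: ip_abs => // s'; apply: supnorm_ge.
Qed.

Lemma Ts_char (R : realType) (S A : finType) (m : nat) (gamma : R)
  (Po : tkernel R S A) (D : (S -> R) -> (S -> R) -> R) (beta : S -> A -> R)
  (r : S -> A -> R) (g : 'I_m -> S -> A -> R) (lam : 'I_m -> R) v s (pi : {ffun S -> A}) :
  (forall pi' : {ffun S -> A}, Tpi gamma Po D beta r g lam pi' v s <= Tpi gamma Po D beta r g lam pi v s) ->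
  Tstar gamma Po D beta r g lam v s = Tpi gamma Po D beta r g lam pi v s.
Proof.
move=> h; rewrite /Tstar; apply: sup_max; first by exists pi.
by move=> _ [pi' _ <-]; apply: h.
Qed.

Lemma Ts_max (R : realType) (S A : finType) (m : nat) (gamma : R)
  (Po : tkernel R S A) (D : (S -> R) -> (S -> R) -> R) (beta : S -> A -> R)
  (r : S -> A -> R) (g : 'I_m -> S -> A -> R) (lam : 'I_m -> R) v s :
  (0 < #|A|)%N ->
  exists pi : {ffun S -> A},
  Tstar gamma Po D beta r g lam v s = Tpi gamma Po D beta r g lam pi v s /\
  (forall pi' : {ffun S -> A}, Tpi gamma Po D beta r g lam pi' v s <= Tpi gamma Po D beta r g lam pi v s).
Proof.
move=> /card_gt0P [a0 _].
pose pi0 : {ffun S -> A} := [ffun _ => a0].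
case: (@arg_maxP _ R _ pi0 xpredT (fun pi : {ffun S -> A} => Tpi gamma Po D beta r g lam pi v s) isT) => pi _ H.
have h : forall pi' : {ffun S -> A}, Tpi gamma Po D beta r g lam pi' v s <= Tpi gamma Po D beta r g lam pi v s.
  by move=> pi'; have := H pi' isT.
by exists pi; split => //; apply: Ts_char.
Qed.

Lemma aux4 (R : realType) (x11 x12 x21 x22 N : R) : x21 <= x11 -> x12 <= x22 ->
  `|x11 - x12| <= N -> `|x21 - x22| <= N -> `|x11 - x22| <= N.
Proof.
move=> a1 a2; rewrite !ler_norml => /andP [b1 b2] /andP [b3 b4].
apply/andP; split; lra.
Qed.

Theorem proposition3 (R : realType) (S A : finType) (m : nat) (gamma : R)
  (Po : tkernel R S A) (D : (S -> R) -> (S -> R) -> R) (beta : S -> A -> R)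
  (r : S -> A -> R) (Rbar : R) (g : 'I_m -> S -> A -> R) (tau : 'I_m -> R)
  (lam : 'I_m -> R)
  (hA : (0 < #|A|)%N)
  (hgamma : 0 <= gamma < 1)
  (hPo : forall s a, is_dist (Po s a))
  (hmin : forall s a (w : S -> R), exists2 P, Pset Po D beta s a P &
            forall Q, Pset Po D beta s a Q -> ip P w <= ip Q w)
  (hr : forall s a, 0 <= r s a <= Rbar)
  (hg : forall i s a, 0 <= g i s a <= tau i)
  (hlam : forall i, 0 <= lam i) :
  let T := Tpi gamma Po D beta r g lam in
  let Ts := Tstar gamma Po D beta r g lam in
  (* (1) monotonicity *)
  (forall (v1 v2 : S -> R), (forall s, v2 s <= v1 s) ->
     (forall (pi : {ffun S -> A}) s, T pi v2 s <= T pi v1 s) /\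
     (forall s, Ts v2 s <= Ts v1 s)) /\
  (* (2) translation invariance *)
  (forall (v : S -> R) (c : R),
     (forall (pi : {ffun S -> A}) s,
        T pi (fun s' => v s' + c) s = T pi v s + gamma * c) /\
     (forall s, Ts (fun s' => v s' + c) s = Ts v s + gamma * c)) /\
  (* (3) contraction and unique fixed point *)
  (forall (v1 v2 : S -> R),
     (forall (pi : {ffun S -> A}),
        supnorm (fun s => T pi v1 s - T pi v2 s) <= gamma * supnorm (fun s => v1 s - v2 s)) /\
     supnorm (fun s => Ts v1 s - Ts v2 s) <= gamma * supnorm (fun s => v1 s - v2 s)) /\
  (forall (pi : {ffun S -> A}),
     let Vl := fun s => robust_value gamma Po D beta pi r s
                        - \sum_(i < m) lam i * robust_value gamma Po D beta pi (g i) s in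
     (forall s, T pi Vl s = Vl s) /\
     (forall v : S -> R, (forall s, T pi v s = v s) -> v = Vl)).
Proof.
move=> T Ts.
have g0 : 0 <= gamma by case/andP: hgamma.
have Tmono : forall (v1 v2 : S -> R), (forall s, v2 s <= v1 s) ->
    forall (pi : {ffun S -> A}) s, T pi v2 s <= T pi v1 s.
  move=> v1 v2 h pi s; rewrite /T (@Tpi_aff _ _ _ _ gamma Po D beta r g lam pi v1 s).
  rewrite (@Tpi_aff _ _ _ _ gamma Po D beta r g lam pi v2 s) lerD2l.
  apply: ler_wpM2l => //; apply: ip_le => // s'; by case: (hPo s (pi s)).
have Ttr : forall (v : S -> R) c (pi : {ffun S -> A}) s,
    T pi (fun s' => v s' + c) s = T pi v s + gamma * c.
  move=> v c pi s; rewrite /T (@Tpi_aff _ _ _ _ gamma Po D beta r g lam pi v s).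
  rewrite (@Tpi_aff _ _ _ _ gamma Po D beta r g lam pi (fun s' => v s' + c) s).
  rewrite ipD ipc //; ring.
have Tdl : forall (v1 v2 : S -> R) (pi : {ffun S -> A}) s,
    `|T pi v1 s - T pi v2 s| <= gamma * supnorm (fun s => v1 s - v2 s).
  by move=> v1 v2 pi s; apply: Tdiff_le.
have N0 : forall v1 v2 : S -> R, 0 <= gamma * supnorm (fun s => v1 s - v2 s).
  by move=> v1 v2; apply: mulr_ge0 => //; apply: supnorm_ge0.
split.
  move=> v1 v2 h; split; first exact: Tmono.
  move=> s; have [pi2 [e2 _]] := @Ts_max _ _ _ _ gamma Po D beta r g lam v2 s hA.
  have [pi1 [e1 h1]] := @Ts_max _ _ _ _ gamma Po D beta r g lam v1 s hA.
  rewrite /Ts e2 e1; apply: le_trans (h1 pi2); exact: Tmono.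
split.
  move=> v c; split; first exact: Ttr.
  move=> s; have [pi [e h]] := @Ts_max _ _ _ _ gamma Po D beta r g lam v s hA.
  rewrite /Ts e -(Ttr v c pi s); apply: Ts_char => pi'.
  have := Ttr v c pi' s; have := Ttr v c pi s; rewrite /T => -> ->.
  by rewrite lerD2r; apply: h.
split.
  move=> v1 v2; split.
    by move=> pi; apply: supnorm_le => // s; apply: Tdl.
  apply: supnorm_le => // s.
  have [pi2 [e2 h2]] := @Ts_max _ _ _ _ gamma Po D beta r g lam v2 s hA.
  have [pi1 [e1 h1]] := @Ts_max _ _ _ _ gamma Po D beta r g lam v1 s hA.
  rewrite /Ts e1 e2.
  have a1 := h1 pi2; have a2 := h2 pi1.
  exact: (@aux4 _ _ _ _ _ _ a1 a2 (Tdl v1 v2 pi1 s) (Tdl v1 v2 pi2 s)).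
move=> pi Vl.
have Ub0 : 0 <= `|Rbar| := normr_ge0 _.
have hur : forall s a, 0 <= r s a <= `|Rbar|.
  by move=> s a; case/andP: (hr s a) => h1 h2; rewrite h1 /= (le_trans h2 (ler_norm _)).
have hug : forall i s a, 0 <= g i s a <= `|tau i|.
  by move=> i s a; case/andP: (hg i s a) => h1 h2; rewrite h1 /= (le_trans h2 (ler_norm _)).
set Vr := robust_value gamma Po D beta pi r.
have fixp : forall s, T pi Vl s = Vl s.
  move=> s.
  have [Pr hPr hPrm] := hmin s (pi s) Vr.
  have key : forall i, gamma * (lam i * rmin Po D beta s (pi s) (robust_value gamma Po D beta pi (g i)))
     = lam i * robust_value gamma Po D beta pi (g i) s - lam i * g i s (pi s)
       - gamma * (lam i * ip (Po s (pi s)) (robust_value gamma Po D beta pi (g i))).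
    move=> i; have [P hP hPm] := hmin s (pi s) (robust_value gamma Po D beta pi (g i)).
    rewrite (rmin_eq hP hPm).
    rewrite (@rv_bellman _ _ _ gamma Po D beta pi (g i) `|tau i| hgamma (normr_ge0 _) hmin (hug i) s P hP hPm).
    ring.
  rewrite /T /Tpi (rmin_eq hPr hPrm) [gamma * \sum_(i < m) _]mulr_sumr (eq_bigr _ (fun i _ => key i)).
  rewrite /Vl ipB ip_sum !sumrB.
  rewrite (@rv_bellman _ _ _ gamma Po D beta pi r `|Rbar| hgamma Ub0 hmin hur s Pr hPr hPrm).
  rewrite -mulr_sumr.
  ring.
split=> // v hv; apply/funext => s.
set N := supnorm (fun s => v s - Vl s).
have NN0 : 0 <= N by apply: supnorm_ge0.
have hN : N <= gamma * N.
  apply: supnorm_le => [|s']; first exact: mulr_ge0.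
  rewrite -(hv s') -(fixp s'); exact: Tdl.
have hN0 : N = 0.
  apply/le_anti; rewrite NN0 andbT.
  have g1 : gamma < 1 by case/andP: hgamma.
  nra.
have := @supnorm_ge _ _ (fun s => v s - Vl s) s.
by rewrite -/N hN0 normr_le0 subr_eq0 => /eqP.
Qed.
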